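(* Let $M$ be any matroid that is representable over $\mathbb{Q}$. Then there exists an integer $N\ge 1$ such that $M$ is isomorphic to a minor of the matroid $M(\mathcal{A}_N)$ underlying the resonance arrangement $\mathcal{A}_N$. Equivalently, every hyperplane arrangement $\mathcal{B}$ defined over $\mathbb{Q}$ arises (up to isomorphism of the underlying matroids) from $\mathcal{A}_N$, for some large enough $N$, by a finite sequence of restriction and contraction steps.
   Context: For $n\ge1$, the resonance arrangement $\mathcal{A}_n$ is the arrangement in $\mathbb{R}^n$ (or $\mathbb{Q}^n$) consisting of the hyperplanes $H_I=\{x:\sum_{i\in I}x_i=0\}$ for all nonempty $I\subseteq[n]$; equivalently its normal vectors are all nonzero $0/1$-vectors $\chi_I$ in $\mathbb{R}^n$. The matroid $M(\mathcal{A}_n)$ has ground set $\mathcal{A}_n$ and a subset is independent iff the corresponding normal vectors $\chi_I$ are linearly independent. A matroid is representable over $\mathbb{Q}$ if it equals the matroid of linearly independent column subsets of some matrix over $\mathbb{Q}$; a matroid of an arrangement is the matroid of its normal vectors. For a matroid $M=(E,\mathcal{I})$ and $S\subseteq E$: the restriction $M|S$ has ground set $S$ and independent sets $\{I\in\mathcal{I}: I\subseteq S\}$; if $S$ is independent, the contraction $M/S$ has ground set $E\setminus S$ and independent sets $\{I\subseteq E\setminus S: I\cup S\in\mathcal{I}\}$. A minor of $M$ is any matroid obtained from $M$ by a finite sequence of restrictions and contractions. *)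

(* Defs.v *)
From HB Require Import structures.
From mathcomp Require Import all_boot all_order all_algebra.
Set Implicit Arguments. Unset Strict Implicit. Unset Printing Implicit Defensive.
Import GRing.Theory.
Local Open Scope ring_scope.

Record mat (E : finType) := Mat { gnd : {set E}; ind : {set E} -> Prop }.

(* Linear independence over Q of the family (v e)_{e in S} (as a family:
   a repeated vector makes the family dependent), via MathComp's [free]. *)
Definition lin_indep (E : finType) (r : nat) (v : E -> 'rV[rat]_r)
  (S : {set E}) : Prop := free [seq v e | e <- enum S].

Definition vec_matroid (E : finType) (r : nat) (v : E -> 'rV[rat]_r) : mat E :=
  Mat setT (lin_indep v).

Definition representable_Q (E : finType) (M : mat E) : Prop :=
  exists (r : nat) (v : E -> 'rV[rat]_r),
    gnd M = setT /\ forall S : {set E}, ind M S <-> lin_indep v S.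

Definition restr (E : finType) (M : mat E) (S : {set E}) : mat E :=
  Mat S (fun I => I \subset S /\ ind M I).

(* Contraction M/S (used only for independent S). *)
Definition contr (E : finType) (M : mat E) (S : {set E}) : mat E :=
  Mat (gnd M :\: S) (fun I => I \subset gnd M :\: S /\ ind M (I :|: S)).

Inductive minor_of (E : finType) (M : mat E) : mat E -> Prop :=
| minor_refl : minor_of M M
| minor_restr (N : mat E) (S : {set E}) : minor_of M N -> S \subset gnd N -> minor_of M (restr N S)
| minor_contr (N : mat E) (S : {set E}) : minor_of M N -> S \subset gnd N -> ind N S ->
    minor_of M (contr N S).

Definition mat_iso (E1 E2 : finType) (M1 : mat E1) (M2 : mat E2) : Prop :=
  exists f : E1 -> E2,
    {in gnd M1 &, injective f} /\ f @: gnd M1 = gnd M2 /\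
    forall S : {set E1}, S \subset gnd M1 -> (ind M1 S <-> ind M2 (f @: S)).

Definition res_ground (n : nat) : finType := {I : {set 'I_n} | I != set0}.

(* Normal vector chi_I of the hyperplane H_I. *)
Definition chi (n : nat) (I : res_ground n) : 'rV[rat]_n :=
  \row_(i < n) (i \in val I)%:R.

Definition resonance_matroid (n : nat) : mat (res_ground n) :=
  vec_matroid (@chi n).

(* Main.v *)
Require Import Defs.
From mathcomp Require Import all_boot all_order all_algebra.
Set Implicit Arguments. Unset Strict Implicit. Unset Printing Implicit Defensive.
Import Order.TTheory GRing.Theory Num.Theory.
Local Open Scope ring_scope.

Section LinAux.
Variables (K : fieldType) (vT : vectType K) (T : finType) (f : T -> vT) (A : {set T}).

Let X := map_tuple f (enum_tuple A).

Lemma X_nth (i : 'I_#|A|) : X`_i = f (enum_val i).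
Proof.
rewrite /X /= (nth_map (enum_val i)) ?size_enum ?cardE //=; last by rewrite -cardE.
by rewrite /enum_val; congr f; apply: set_nth_default; rewrite -cardE.
Qed.

Lemma sum_enum_val (c : T -> K) :
  \sum_(x in A) c x *: f x = \sum_(i < #|A|) c (enum_val i) *: X`_i.
Proof. by rewrite (big_enum_val (fun x => c x *: f x)); apply: eq_bigr => i _; rewrite X_nth. Qed.

Definition cofk (k : 'I_#|A| -> K) (x : T) : K := \sum_(i < #|A| | enum_val i == x) k i.

Lemma cofkE k i : cofk k (enum_val i) = k i.
Proof.
rewrite /cofk (bigD1 i) //= big1 ?addr0 // => j /andP[/eqP/enum_val_inj -> /eqP]; done.
Qed.

Lemma free_setP :
  reflect (forall c : T -> K, \sum_(x in A) c x *: f x = 0 -> forall x, x \in A -> c x = 0)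
    (free [seq f x | x <- enum A]).
Proof.
have -> : [seq f x | x <- enum A] = X by [].
apply: (iffP (@freeP K vT #|A| X)) => [H c Hc x xA | H k Hk i].
  have := H (fun i => c (enum_val i)); rewrite -sum_enum_val => /(_ Hc (enum_rank_in xA x)).
  by rewrite enum_rankK_in.
rewrite -cofkE; apply: H; last exact: enum_valP.
by rewrite sum_enum_val -[RHS]Hk; apply: eq_bigr => j _; rewrite cofkE.
Qed.

Lemma span_setP u : u \in <<[seq f x | x <- enum A]>>%VS ->
  exists c : T -> K, u = \sum_(x in A) c x *: f x.
Proof.
have -> : [seq f x | x <- enum A] = X by [].
move=> /coord_span ->; exists (cofk (fun i => coord X i u)).
by rewrite sum_enum_val; apply: eq_bigr => j _; rewrite cofkE.
Qed.
End LinAux.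


Section Quot.
Variables (K : fieldType) (E R : finType) (n r : nat) (v : E -> 'rV[K]_r)
  (g : R -> 'rV[K]_n) (P : 'M[K]_(n, r)) (S : {set R}) (f : E -> R) (D : K).
Hypotheses (hD : D != 0) (hf : injective f) (hfS : forall e, f e \notin S)
  (hF1 : forall e, g (f e) *m P = D *: v e)
  (hF2 : forall s, s \in S -> g s *m P = 0)
  (hF3 : forall y, y *m P = 0 -> y \in <<[seq g s | s <- enum S]>>%VS)
  (hF4 : free [seq g s | s <- enum S]).

Lemma sumU (F : R -> 'rV[K]_n) (I : {set E}) :
  \sum_(x in f @: I :|: S) F x = \sum_(e in I) F (f e) + \sum_(x in S) F x.
Proof.
have inj : {in I &, injective f} by move=> x y _ _; apply: hf.
rewrite -(big_imset F inj).
rewrite -bigU /=; last first.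
  apply/pred0P => x /=; apply/negbTE/negP => /andP[/imsetP[e _ ->]].
  by rewrite (negbTE (hfS e)).
by apply: eq_bigl => x; rewrite !inE.
Qed.

Lemma quot_free (I : {set E}) :
  free [seq v e | e <- enum I] = free [seq g x | x <- enum (f @: I :|: S)].
Proof.
apply/idP/idP => /free_setP H; apply/free_setP.
- move=> c; rewrite sumU => Hc.
  have HS : (\sum_(x in S) c x *: g x) *m P = 0.
    rewrite mulmx_suml big1 // => x xS; by rewrite -scalemxAl hF2 // scaler0.
  have HI : \sum_(e in I) (c (f e) * D) *: v e = 0.
    have := congr1 (fun y => y *m P) Hc; rewrite mulmxDl mul0mx HS addr0 mulmx_suml.
    move=> H0; rewrite -[RHS]H0; apply: eq_bigr => e _; by rewrite -scalemxAl hF1 scalerA.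
  have HfI : forall e, e \in I -> c (f e) = 0.
    move=> e eI; have := H _ HI e eI; move/eqP; rewrite mulf_eq0 (negbTE hD) orbF.
    by move/eqP.
  move: Hc; rewrite big1 ?add0r; last by move=> e eI; rewrite HfI // scale0r.
  move/free_setP: hF4 => H4 Hc x; rewrite inE => /orP[/imsetP[e eI ->]|xS].
    exact: HfI.
  exact: H4.
- move=> d Hd e eI.
  pose y := \sum_(e in I) d e *: g (f e).
  have : y *m P = 0.
    rewrite mulmx_suml (eq_bigr (fun e' => D *: (d e' *: v e'))).
      by rewrite -scaler_sumr Hd scaler0.
    by move=> e' _; rewrite -scalemxAl hF1 !scalerA mulrC.
  move=> /hF3 /span_setP [b Hb].
  pose c x := \sum_(e in I | f e == x) d e - (x \in S)%:R * b x.
  have cf : forall e, e \in I -> c (f e) = d e.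
    move=> e0 He0; rewrite /c (negbTE (hfS e0)) mul0r subr0.
    rewrite (bigD1 e0) ?He0 ?eqxx //= big1 ?addr0 // => e1 /andP[/andP[_ /eqP/hf ->]].
    by rewrite eqxx.
  have cS : forall s, s \in S -> c s = - b s.
    move=> s sS; rewrite /c sS mul1r big1 ?sub0r // => e1 /andP[_ /eqP Hs].
    by move: (hfS e1); rewrite Hs sS.
  rewrite -(cf e eI); apply: (H c _ (f e)); last first.
    by rewrite inE; apply/orP; left; apply/imsetP; exists e.
  rewrite sumU (eq_bigr (fun e => d e *: g (f e))); last by move=> e1 e1I; rewrite cf.
  rewrite (eq_bigr (fun s => - (b s *: g s))); last by move=> s sS; rewrite cS // scaleNr.
  by rewrite sumrN -Hb subrr.
Qed.
End Quot.


Section Ints.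
Variables (E : finType) (r : nat) (v : E -> 'rV[rat]_r).

Definition dq (x : E * 'I_r) : int := denq (v x.1 0 x.2).
Definition Dq : rat := \prod_(x : E * 'I_r) (dq x)%:~R.
Definition zz (e : E) (j : 'I_r) : int :=
  numq (v e 0 j) * \prod_(x | x != (e, j)) dq x.
Definition wp e j : nat := if (0 <= zz e j) then `|zz e j|%N else 0%N.
Definition wm e j : nat := if (0 <= zz e j) then 0%N else `|zz e j|%N.

Lemma Dq_neq0 : Dq != 0.
Proof.
apply/prodf_neq0 => x _; rewrite intr_eq0; apply/negP => /eqP H.
by have := denq_gt0 (v x.1 0 x.2); rewrite /dq in H; rewrite H.
Qed.

Lemma zzE e j : (zz e j)%:~R = Dq * v e 0 j.
Proof.
rewrite /zz /Dq [in RHS](bigD1 (e, j)) //= intrM rmorph_prod /=.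
rewrite numqE /dq /=.
by rewrite -mulrA mulrC.
Qed.

Lemma wpmE e j : (wp e j)%:R - (wm e j)%:R = Dq * v e 0 j :> rat.
Proof.
rewrite -zzE /wp /wm; case: ifP => H.
  by rewrite subr0 natr_absz ger0_norm.
rewrite sub0r natr_absz ltr0_norm ?opprK //.
  by rewrite rmorphN opprK.
by rewrite ltNge H.
Qed.

Definition Lm : nat := \sum_(x : E * 'I_r) (wp x.1 x.2 + wm x.1 x.2).
Definition Lw := Lm.+1.

Lemma wp_le e j : (wp e j <= Lm)%N.
Proof.
rewrite /Lm (bigD1 (e, j)) //=; apply: leq_trans (leq_addr _ _); apply: leq_addr.
Qed.
Lemma wm_le e j : (wm e j <= Lm)%N.
Proof.
rewrite /Lm (bigD1 (e, j)) //=; apply: leq_trans (leq_addr _ _); apply: leq_addl.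
Qed.
End Ints.


Section Constr.
Variables (E : finType) (r : nat) (v : E -> 'rV[rat]_r).

Let L := Lw v.
Definition Cty : finType := (option E + ('I_r * 'I_L * bool))%type.
Let N := #|Cty|.
Definition enc (c : Cty) : 'I_N := enum_rank c.
Definition dec (i : 'I_N) : Cty := enum_val i.
Lemma encK : cancel enc dec. Proof. exact: enum_rankK. Qed.
Lemma decK : cancel dec enc. Proof. exact: enum_valK. Qed.

Definition cs (p : pred Cty) : {set 'I_N} := [set i | p (dec i)].
Lemma in_cs p i : (i \in cs p) = p (dec i). Proof. by rewrite inE. Qed.
Lemma enc_cs p c : (enc c \in cs p) = p c. Proof. by rewrite in_cs encK. Qed.

Definition d0 : res_ground N.
Proof. exists [set enc (inl None)]; apply/set0Pn; exists (enc (inl None)); exact: set11. Defined.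
Definition mkR (p : pred Cty) : res_ground N := insubd d0 (cs p).
Lemma mkR_val (p : pred Cty) c : p c -> val (mkR p) = cs p.
Proof. move=> pc; rewrite /mkR insubdK //; apply/set0Pn; exists (enc c); by rewrite enc_cs. Qed.

Definition vp (p : pred Cty) : 'rV[rat]_N := \row_i (p (dec i))%:R.
Lemma chi_mkR (p : pred Cty) c : p c -> chi (mkR p) = vp p.
Proof. by move=> pc; apply/rowP => i; rewrite !mxE (mkR_val pc) in_cs. Qed.

Definition tagp (t : option E) : pred Cty := pred1 (inl t).
Definition sec (x : 'I_r * 'I_L * bool) : Cty := inr (x.1.1, ord0, ~~ x.2).
Definition pairp (x : 'I_r * 'I_L * bool) : pred Cty :=
  fun c => (c == inr x) || (c == sec x).
Definition fep (e : E) : pred Cty := fun c =>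
  match c with
  | inl None => true
  | inl (Some e') => e' == e
  | inr x => (x.1.2 < (if x.2 then wp v e x.1.1 else wm v e x.1.1))%N
  end.

Definition Sset : {set res_ground N} :=
  [set mkR (tagp t) | t : option E] :|: [set mkR (pairp x) | x : 'I_r * 'I_L * bool].
Definition fmap (e : E) : res_ground N := mkR (fep e).

Definition wt (c : Cty) (j : 'I_r) : rat :=
  match c with
  | inl _ => 0
  | inr x => (x.1.1 == j)%:R * (if x.2 then 1 else -1)
  end.
Definition Pm : 'M[rat]_(N, r) := \matrix_(i, j) wt (dec i) j.
Definition Qm : 'M[rat]_(r, N) := \matrix_(j, i) (dec i == inr (j, ord0, false))%:R.

Lemma vpP p j : (vp p *m Pm) 0 j = \sum_(c : Cty) (p c)%:R * wt c j.
Proof.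
rewrite !mxE (big_enum_val (fun c => (p c)%:R * wt c j)) /=.
by apply: eq_bigr => i _; rewrite !mxE.
Qed.

Lemma count_ord (L0 a : nat) : (a <= L0)%N -> \sum_(k < L0) ((k < a)%N)%:R = a%:R :> rat.
Proof.
move=> aL; rewrite (eq_bigr (fun k : 'I_L0 => if (k < a)%N then 1 else 0)); last by move=> k _; case: ifP.
by rewrite -big_mkcond /= -(big_ord_widen _ (fun _ => 1)) // sumr_const card_ord.
Qed.

Lemma F1 e : chi (fmap e) *m Pm = Dq v *: v e.
Proof.
rewrite /fmap (chi_mkR (c := inl None)) //; apply/rowP => j.
rewrite vpP big_sumType /= big1 ?add0r; last by move=> t _; rewrite mulr0.
rewrite -(pair_bigA _ (fun (y : ('I_r * 'I_L)%type) (b : bool) => ((y.2 < (if b then wp v e y.1 else wm v e y.1))%N)%:R * ((y.1 == j)%:R * (if b then 1 else -1)))) /=.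
rewrite -(pair_bigA _ (fun (j' : 'I_r) (k : 'I_L) => \sum_b ((k < (if b then wp v e j' else wm v e j'))%N)%:R * ((j' == j)%:R * (if b then 1 else -1)))) /=.
rewrite (bigD1 j) //= [X in _ + X]big1 ?addr0; last first.
  move=> j' /negbTE H; apply: big1 => k _; apply: big1 => b _.
  by rewrite H mul0r mulr0.
rewrite (eq_bigr (fun k : 'I_L => ((k < wp v e j)%N)%:R - ((k < wm v e j)%N)%:R)); last first.
  move=> k _; rewrite big_bool /= eqxx.
  rewrite /=.
by rewrite mulr1n !mulr1 mul1r mulrN1.
rewrite sumrB !count_ord ?wpmE ?mxE //; apply: leqW; [exact: wm_le | exact: wp_le].
Qed.

Definition dl (c : Cty) := vp (pred1 c).

Lemma sec_neq x : inr x != sec x.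
Proof.
case: x => [[j k] b]; rewrite /sec /=; apply/eqP => H.
have := congr1 (fun c : Cty => if c is inr y then y.2 else true) H; by case: (b) => /=.
Qed.

Lemma vp_pair x : vp (pairp x) = dl (inr x) + dl (sec x).
Proof.
apply/rowP => i; rewrite !mxE /pairp /=.
case: (eqVneq (dec i) (inr x)) => [->|/negbTE H] /=.
  by rewrite (negbTE (sec_neq x)) ?eqxx /= addr0.
by rewrite add0r.
Qed.

Lemma dlP c : dl c *m Pm = \row_j wt c j.
Proof.
apply/rowP => j; rewrite vpP mxE (bigD1 c) //= eqxx mul1r big1 ?addr0 //.
by move=> d /negbTE ->; rewrite mul0r.
Qed.

Lemma F2 s : s \in Sset -> chi s *m Pm = 0.
Proof.
case/setUP => /imsetP [t _ ->].
  rewrite (chi_mkR (c := inl t)); last by rewrite /tagp /= eqxx.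
  have -> : vp (tagp t) = dl (inl t) by [].
  by rewrite dlP; apply/rowP => j; rewrite !mxE.
rewrite (chi_mkR (c := inr t)); last by rewrite /pairp eqxx.
rewrite vp_pair mulmxDl !dlP.
apply/rowP => j; rewrite !mxE /=; case: t => [[j0 k] b] /=.
by rewrite -mulrDr; case: b; rewrite /= ?addrN ?addNr mulr0.
Qed.

Definition W := <<[seq chi s | s <- enum Sset]>>%VS.

Lemma chi_W s : s \in Sset -> chi s \in W.
Proof. by move=> sS; apply: memv_span; apply: map_f; rewrite mem_enum. Qed.

Lemma tag_W t : dl (inl t) \in W.
Proof.
have -> : dl (inl t) = vp (tagp t) by [].
rewrite -(chi_mkR (p := tagp t) (c := inl t)); last by rewrite /tagp /= eqxx.
by apply: chi_W; apply/setUP; left; apply/imsetP; exists t.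
Qed.

Lemma pair_W x : vp (pairp x) \in W.
Proof.
rewrite -(chi_mkR (c := inr x)); last by rewrite /pairp eqxx.
by apply: chi_W; apply/setUP; right; apply/imsetP; exists x.
Qed.

Lemma rowwtQ j0 k0 b0 : (\row_j wt (inr (j0, k0, b0)) j) *m Qm
   = (if b0 then 1 else -1) *: dl (inr (j0, ord0, false)).
Proof.
set x := (j0, k0, b0).
apply/rowP => i; rewrite !mxE (bigD1 x.1.1) //= [X in _ + X]big1 ?addr0.
  rewrite !mxE eqxx mul1r.
  by case: (dec i == _); rewrite ?mulr1 ?mulr0.
by move=> j /negbTE H; rewrite !mxE eq_sym H mul0r mul0r.
Qed.

Lemma key c : dl c + dl c *m Pm *m Qm \in W.
Proof.
rewrite dlP; case: c => [t|[[j k] b]].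
  have -> : (\row_j wt (inl t) j) = 0 by apply/rowP => j; rewrite !mxE.
  rewrite mul0mx addr0; exact: tag_W.
rewrite rowwtQ.
case: b.
  have E1 : sec (j, k, true) = inr (j, ord0, false) by [].
  rewrite scale1r; have := pair_W (j, k, true); rewrite vp_pair E1; exact.
have E2 : sec (j, k, false) = inr (j, ord0, true) by [].
have E3 : sec (j, ord0, true) = inr (j, ord0, false) by [].
rewrite scaleN1r.
have := memvB (pair_W (j, k, false)) (pair_W (j, ord0, true)).
rewrite !vp_pair E2 E3.
rewrite opprD addrA addrK; exact.
Qed.




Lemma F3 y : y *m Pm = 0 -> y \in W.
Proof.
move=> Hy.
have e1 : y = \sum_i y 0 i *: dl (dec i).
  rewrite {1}(row_sum_delta y); apply: eq_bigr => i _; congr (_ *: _).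
  apply/rowP => i'; rewrite !mxE eqxx /= (inj_eq (can_inj decK)); done.
have : \sum_i y 0 i *: (dl (dec i) + dl (dec i) *m Pm *m Qm) \in W.
  by apply: memv_suml => i _; apply: memvZ; apply: key.
rewrite (eq_bigr (fun i => y 0 i *: dl (dec i) + (y 0 i *: dl (dec i)) *m Pm *m Qm)); last first.
  by move=> i _; rewrite scalerDr !scalemxAl.
by rewrite big_split /= -!mulmx_suml -e1 Hy mul0mx addr0.
Qed.


Lemma val_tag t : val (mkR (tagp t)) = cs (tagp t).
Proof. by apply: (mkR_val (c := inl t)); rewrite /tagp /= eqxx. Qed.
Lemma val_pair x : val (mkR (pairp x)) = cs (pairp x).
Proof. by apply: (mkR_val (c := inr x)); rewrite /pairp eqxx. Qed.

Lemma mkR_ext (p q : pred Cty) : p =1 q -> mkR p = mkR q.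
Proof. by move=> H; rewrite /mkR /cs; congr insubd; apply/setP => i; rewrite !inE H. Qed.

Lemma pick_zero (c : res_ground N -> rat) s0 i :
  \sum_(s in Sset) c s *: chi s = 0 -> s0 \in Sset -> i \in val s0 ->
  (forall s, s \in Sset -> s != s0 -> i \in val s -> c s = 0) -> c s0 = 0.
Proof.
move=> H s0S is0 Hs.
have := congr1 (fun m : 'rV_N => m 0 i) H; rewrite summxE (bigD1 s0) //= big1.
  by rewrite !mxE is0 mulr1 addr0.
move=> s /andP[sS ss0]; rewrite !mxE; case: (boolP (i \in val s)) => H'.
  by rewrite (Hs s sS ss0 H') mul0r.
by rewrite mulr0.
Qed.

Lemma F4ab (c : res_ground N -> rat) :
  \sum_(s in Sset) c s *: chi s = 0 ->
  (forall t, c (mkR (tagp t)) = 0) /\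
  (forall j k b, k != ord0 -> c (mkR (pairp (j, k, b))) = 0).
Proof.
move=> H; split.
  move=> t; apply: (pick_zero (i := enc (inl t)) H).
  - by apply/setUP; left; apply/imsetP; exists t.
  - by rewrite val_tag enc_cs /tagp /= eqxx.
  move=> s /setUP [] /imsetP [y _ ->] ne.
    rewrite val_tag enc_cs /tagp /= => /eqP [] Hy; by rewrite Hy eqxx in ne.
  by rewrite val_pair enc_cs /pairp /sec.
move=> j k b kne; apply: (pick_zero (i := enc (inr (j, k, b))) H).
- by apply/setUP; right; apply/imsetP; exists (j, k, b).
- by rewrite val_pair enc_cs /pairp eqxx.
move=> s /setUP [] /imsetP [y _ ->] ne.
  by rewrite val_tag enc_cs /tagp.
case: y ne => [[j' k'] b'] ne.
rewrite val_pair enc_cs /pairp /sec; case/orP => /eqP H'.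
  by case: H' ne => -> -> ->; rewrite eqxx.
by case: H' kne => _ -> _; rewrite eqxx.
Qed.

Lemma F4 (c : res_ground N -> rat) :
  \sum_(s in Sset) c s *: chi s = 0 -> forall s, s \in Sset -> c s = 0.
Proof.
move=> H; have [Ht Hp] := F4ab H.
move=> s /setUP [] /imsetP [y _ ->]; first by apply: Ht.
case: y => [[j k] b].
case: (eqVneq k ord0) => [Hk|Hk]; last exact: Hp.
rewrite Hk; apply: (pick_zero (i := enc (inr (j, ord0, b))) H).
- by apply/setUP; right; apply/imsetP; exists (j, ord0, b).
- by rewrite val_pair enc_cs /pairp eqxx.
move=> s1 /setUP [] /imsetP [y _ ->] ne.
  by rewrite val_tag enc_cs /tagp.
case: y ne => [[j' k'] b'] ne.
rewrite val_pair enc_cs /pairp /sec; case/orP => /eqP H'.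
  by case: H' ne => -> -> ->; rewrite eqxx.
case: H' => Hj Hb; case: (eqVneq k' ord0) => [Hk0|Hk0]; last by apply: (Hp j' k' b').
move: ne; rewrite Hk0 -Hj.
rewrite (mkR_ext (q := pairp (j, ord0, b))) ?eqxx //.
move=> d; rewrite /pairp /sec /= Hb negbK orbC; done.
Qed.

Lemma val_f e : val (fmap e) = cs (fep e).
Proof. exact: (mkR_val (c := inl None)). Qed.

Lemma fmap_inj : injective fmap.
Proof.
move=> e1 e2 H; have := congr1 val H; rewrite !val_f => H2.
have : enc (inl (Some e1)) \in cs (fep e2) by rewrite -H2 enc_cs /= eqxx.
by rewrite enc_cs /= => /eqP.
Qed.

Lemma fmap_notin e : fmap e \notin Sset.
Proof.
apply/negP => /setUP [] /imsetP [y _ H]; have := congr1 val H;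
  rewrite val_f ?val_tag ?val_pair => H2.
  have : enc (inl None) \in cs (tagp y) by rewrite -H2 enc_cs.
  have : enc (inl (Some e)) \in cs (tagp y) by rewrite -H2 enc_cs /= eqxx.
  by rewrite !enc_cs /tagp /= => /eqP <-.
have : enc (inl None) \in cs (pairp y) by rewrite -H2 enc_cs.
by rewrite enc_cs /pairp /sec.
Qed.

Lemma key_iso (I : {set E}) :
  lin_indep v I <-> lin_indep (@chi N) (fmap @: I :|: Sset).
Proof.
rewrite /lin_indep (@quot_free _ _ _ _ _ v (@chi N) Pm Sset fmap (Dq v)) //.
- exact: Dq_neq0.
- exact: fmap_inj.
- exact: fmap_notin.
- exact: F1.
- exact: F2.
- exact: F3.
- by apply/free_setP; apply: F4.
Qed.
End Constr.

Unset Implicit Arguments.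
Local Close Scope ring_scope.

Theorem theorem1p1 (E : finType) (M : mat E) :
  representable_Q M ->
  exists N : nat, (1 <= N)%N /\
    exists Mn : mat (res_ground N),
      minor_of (resonance_matroid N) Mn /\ mat_iso M Mn.
Proof.
move=> [r [v [hg hind]]].
exists #|Cty v|; split.
  by apply/card_gt0P; exists (inl None).
exists (restr (contr (resonance_matroid #|Cty v|) (Sset v)) (fmap v @: setT)); split.
  apply: minor_restr.
    apply: minor_contr; first exact: minor_refl.
      by apply: subsetT.
    by rewrite /= /lin_indep; apply/free_setP; apply: F4.
  rewrite /=; apply/subsetP => x /imsetP [e _ ->]; rewrite in_setD in_setT andbT.
  exact: fmap_notin.
exists (fmap v); split; first by move=> x y _ _; apply: fmap_inj.
split; first by rewrite hg.
move=> S' _; split.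
  move=> /hind /key_iso H /=; split; first by apply: imsetS; apply: subsetT.
  split=> //; apply/subsetP => x /imsetP [e _ ->]; rewrite in_setD in_setT andbT.
  exact: fmap_notin.
by case=> _ [_ H]; apply/hind; apply/key_iso.
Qed.
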